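(* The vector fields $Y^n_1,\dots,Y^n_{n-1}$ have polynomial coefficients, are Lie symmetries of the ladder system, are linearly independent over $\mathbf{C}$, and pairwise commute; thus they span an $(n-1)$-dimensional Abelian Lie algebra of polynomial Lie symmetries of the ladder system (so the ladder system is integrable by quadrature).
   Context: Coordinates $x=(x_1,\dots,x_n)\in\mathbf{C}^n$, $n\ge2$. The ladder system is the HLV system $\dot x_i = x_i\sum_{j=1}^n (1+i-j)x_j$, identified with the vector field $X_f=\sum_i x_i\big(\sum_j (1+i-j)x_j\big)\partial/\partial x_i$. A vector field $X$ is a Lie symmetry if $[X_f,X]=0$. Notation: $u=\sum_{j=1}^n x_j$, $D=\sum_{j=1}^n x_j\,\partial/\partial x_j$, and $Y^l_m = x_m u^{l-m-1}\big(D-u\,\partial/\partial x_l\big)$ for $l,m\in\{1,\dots,n\}$. *)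

(* Defs.v *)
From HB Require Import structures.
From mathcomp Require Import all_boot all_algebra.
From mathcomp Require Import reals.
From mathcomp Require Import complex.
From mathcomp Require Import mpoly.
Set Implicit Arguments. Unset Strict Implicit. Unset Printing Implicit Defensive.
Import GRing.Theory.
Local Open Scope ring_scope.

(* Polynomial vector fields on F^n: X = sum_i X_i d/dx_i, with X_i in F[x_1..x_n].
   Coordinates are 0-based: x_i, i : 'I_n, stands for the paper's x_(i+1). *)
Definition vfield (F : comNzRingType) (n : nat) := {ffun 'I_n -> {mpoly F[n]}}.

Definition vf_act (F : comNzRingType) n (X : vfield F n) (p : {mpoly F[n]})
  : {mpoly F[n]} := \sum_(i < n) X i * mderiv i p.

Definition lie_bracket (F : comNzRingType) n (X Y : vfield F n) : vfield F n :=
  [ffun i => vf_act X (Y i) - vf_act Y (X i)].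

Definition usum (F : comNzRingType) n : {mpoly F[n]} := \sum_(j < n) 'X_j.

(* The ladder system x_i' = x_i sum_j (1+i-j) x_j (index shift is harmless since
   the coefficient depends only on i-j). *)
Definition ladder (F : comNzRingType) n : vfield F n :=
  [ffun i : 'I_n => 'X_i * \sum_(j < n) ((1 + (i : int) - (j : int))%:~R *: 'X_j)].

(* Y^l_m = x_m u^(l-m-1) (D - u d/dx_l), D = sum_j x_j d/dx_j; only used for m < l,
   so the exponent l-m-1 is a natural number. In components:
   (Y^l_m)_i = x_m u^(l-m-1) (x_i - [i == l] u). *)
Definition Ylm (F : comNzRingType) n (l m : 'I_n) : vfield F n :=
  [ffun i : 'I_n => 'X_m * usum F n ^+ (l - m - 1)%N
                    * ('X_i - (if i == l then usum F n else 0))].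

Lemma ordLast_proof (n : nat) : (1 < n)%N -> (n.-1 < n)%N.
Proof. by case: n. Qed.

Definition ordLast (n : nat) (hn : (1 < n)%N) : 'I_n := Ordinal (ordLast_proof hn).

(* Main.v *)
Require Import Defs.
From HB Require Import structures.
From mathcomp Require Import all_boot all_algebra.
From mathcomp Require Import reals complex mpoly.
From mathcomp Require Import ring.
Import GRing.Theory.
Local Open Scope ring_scope.

Section A.
Variable F : comNzRingType.
Variable n : nat.
Implicit Types (X : vfield F n) (p q : {mpoly F[n]}).

Lemma mderiv_Xi (i j : 'I_n) : mderiv i ('X_j : {mpoly F[n]}) = (j == i)%:R.
Proof.
rewrite mderivX mnm1E; case: eqP => [->|_].
  have ->: (U_(i) - U_(i) = 0)%MM by apply/mnmP=> k; rewrite mnmBE subnn mnm0E.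
  by rewrite mpolyX0 scale1r.
by rewrite scale0r.
Qed.

Lemma act_X X i : vf_act X 'X_i = X i.
Proof.
rewrite /vf_act (bigD1 i) //= mderiv_Xi eqxx mulr1 big1 ?addr0 // => j /negbTE.
by rewrite mderiv_Xi eq_sym => ->; rewrite mulr0.
Qed.

Lemma act_D X p q : vf_act X (p + q) = vf_act X p + vf_act X q.
Proof. by rewrite /vf_act -big_split; apply: eq_bigr => i _; rewrite mderivD mulrDr. Qed.

Lemma act_N X p : vf_act X (- p) = - vf_act X p.
Proof. by rewrite /vf_act -sumrN; apply: eq_bigr => i _; rewrite mderivN mulrN. Qed.

Lemma act_B X p q : vf_act X (p - q) = vf_act X p - vf_act X q.
Proof. by rewrite act_D act_N. Qed.

Lemma act_0 X : vf_act X 0 = 0.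
Proof. by rewrite /vf_act big1 // => i _; rewrite mderiv0 mulr0. Qed.

Lemma act_M X p q : vf_act X (p * q) = vf_act X p * q + p * vf_act X q.
Proof.
rewrite /vf_act mulr_suml mulr_sumr -big_split; apply: eq_bigr => i _.
by rewrite mderivM mulrDr !mulrA [X i * p]mulrC.
Qed.

Lemma act_Z X (c : F) p : vf_act X (c *: p) = c *: vf_act X p.
Proof. by rewrite /vf_act scaler_sumr; apply: eq_bigr => i _; rewrite mderivZ scalerAr. Qed.

Lemma act_sum X (I : finType) (G : I -> {mpoly F[n]}) :
  vf_act X (\sum_i G i) = \sum_i vf_act X (G i).
Proof.
elim/big_rec2: _ => [|i y p _ <-]; first exact: act_0.
by rewrite act_D.
Qed.

Lemma act_exp X p k : vf_act X (p ^+ k.+1) = k.+1%:R * p ^+ k * vf_act X p.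
Proof.
elim: k => [|k IH]; first by rewrite expr1 expr0 mulr1 mul1r.
rewrite exprS act_M IH exprS; move: (p ^+ k) => r; ring.
Qed.

Lemma act_C X c : vf_act X c%:MP = 0.
Proof. by rewrite /vf_act big1 // => i _; rewrite mderivC mulr0. Qed.

Lemma act_1 X : vf_act X 1 = 0.
Proof. by rewrite -mpolyC1 act_C. Qed.

Lemma act_nat X k : vf_act X k%:R = 0.
Proof. by rewrite -mpolyC_nat act_C. Qed.

Variable L : 'I_n.
Let u := usum F n.
Definition wsum : {mpoly F[n]} := \sum_(j < n) (j%:R * 'X_j).
Let w := wsum.
Definition Zf : vfield F n := [ffun i => 'X_i - (if i == L then u else 0)].

Lemma sum_ifL (G : 'I_n -> {mpoly F[n]}) :
  \sum_(j < n) (if j == L then G j else 0) = G L.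
Proof.
by rewrite (bigD1 L) //= eqxx big1 ?addr0 // => j /negbTE ->.
Qed.

Lemma Z_X i : vf_act Zf 'X_i = 'X_i - (if i == L then u else 0).
Proof. by rewrite act_X ffunE. Qed.

Lemma Z_u : vf_act Zf u = 0.
Proof.
rewrite /u /usum act_sum.
under eq_bigr do rewrite Z_X.
by rewrite sumrB sum_ifL subrr.
Qed.

Lemma Z_uexp k : vf_act Zf (u ^+ k) = 0.
Proof. by case: k => [|k]; rewrite ?expr0 ?act_1 // act_exp Z_u mulr0. Qed.

Lemma Z_w : vf_act Zf w = w - L%:R * u.
Proof.
rewrite /w /wsum act_sum.
under eq_bigr do rewrite act_M act_nat act_X mul0r add0r ffunE mulrBr.
rewrite sumrB; congr (_ - _).
rewrite -(sum_ifL (fun j => j%:R * u)); apply: eq_bigr => j _.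
by case: ifP => _; rewrite ?mulr0.
Qed.

Lemma act_scal (g : {mpoly F[n]}) (V : vfield F n) p :
  vf_act [ffun i => g * V i] p = g * vf_act V p.
Proof.
by rewrite /vf_act mulr_sumr; apply: eq_bigr => i _; rewrite ffunE mulrA.
Qed.

Lemma Y_eq m : Ylm F L m = [ffun i => ('X_m * u ^+ (L - m - 1)) * Zf i].
Proof. by apply/ffunP => i; rewrite !ffunE. Qed.

Definition sl (i : 'I_n) : {mpoly F[n]} :=
  \sum_(j < n) ((1 + (i : int) - (j : int))%:~R *: 'X_j).

Lemma sl_eq i : sl i = (1 + i%:R) * u - w.
Proof.
rewrite /sl /u /usum /w /wsum mulr_sumr -sumrB; apply: eq_bigr => j _.
rewrite -mul_mpolyC !rmorphB !rmorphD /= rmorph1 -!pmulrn !mpolyC_nat.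
by rewrite mulrBl.
Qed.

Lemma ladder_eq : ladder F n = [ffun i => 'X_i * sl i].
Proof. by apply/ffunP => i; rewrite !ffunE. Qed.

Lemma f_X i : vf_act (ladder F n) 'X_i = 'X_i * ((1 + i%:R) * u - w).
Proof. by rewrite act_X ladder_eq ffunE sl_eq. Qed.

Lemma f_u : vf_act (ladder F n) u = u * u.
Proof.
rewrite {1}/u /usum act_sum.
under eq_bigr do rewrite f_X mulrBr mulrA mulrDr mulr1 mulrDl.
rewrite sumrB big_split /= -!mulr_suml -/u.
have ->: \sum_(i < n) 'X_i * i%:R = w by apply: eq_bigr => i _; rewrite mulrC.
have eu : \sum_(i < n) ('X_i : {mpoly F[n]}) = u by [].
rewrite mulrC eu; ring.
Qed.

Lemma f_uexp k : vf_act (ladder F n) (u ^+ k) = k%:R * u ^+ k * u.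
Proof.
case: k => [|k]; first by rewrite expr0 act_1 mul0r mul0r.
by rewrite act_exp f_u exprS; move: (u ^+ k) => r; ring.
Qed.

Lemma Z_sl i : vf_act Zf (sl i) = L%:R * u - w.
Proof.
rewrite sl_eq act_B act_M act_D act_1 act_nat Z_u Z_w; ring.
Qed.

Lemma sym_main (m : 'I_n) (k : nat) : (L : nat) = (k + m + 1)%N -> m != L ->
  lie_bracket (ladder F n) [ffun i => ('X_m * u ^+ k) * Zf i] = 0.
Proof.
move=> hL hmL; apply/ffunP => i; rewrite /lie_bracket !ffunE act_scal -/(sl i).
rewrite !act_M f_X f_uexp Z_sl Z_X sl_eq act_B f_X.
case: (eqVneq i L) => [->|hiL].
  rewrite f_u hL !natrD.
  move: (u ^+ k) => r; ring.
rewrite act_0 hL !natrD.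
move: (u ^+ k) => r; ring.
Qed.

Lemma Z_g (m : 'I_n) k : m != L -> vf_act Zf ('X_m * u ^+ k) = 'X_m * u ^+ k.
Proof. by move=> hm; rewrite act_M Z_X Z_uexp (negbTE hm) subr0 mulr0 addr0. Qed.

Lemma Z_Z i : vf_act Zf ('X_i - (if i == L then u else 0)) = 'X_i - (if i == L then u else 0).
Proof. by rewrite act_B Z_X; case: ifP => _; rewrite ?Z_u ?act_0 subr0. Qed.

Lemma comm_main (m m' : 'I_n) k k' : m != L -> m' != L ->
  lie_bracket [ffun i => ('X_m * u ^+ k) * Zf i] [ffun i => ('X_m' * u ^+ k') * Zf i] = 0.
Proof.
move=> hm hm'; apply/ffunP => i; rewrite /lie_bracket !ffunE !act_scal.
rewrite act_M Z_g // Z_Z act_M Z_g // Z_Z.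
move: ('X_i - _) (u ^+ k) (u ^+ k') => a b c; ring.
Qed.

Lemma indep (P : pred 'I_n) (c : 'I_n -> F) (k : 'I_n -> nat) :
  \sum_(m < n | P m) c m *: [ffun i => ('X_m * u ^+ k m) * Zf i] = 0 ->
  forall m, P m -> m != L -> c m = 0.
Proof.
move=> h m Pm hm.
have := congr1 (fun V : vfield F n => meval (fun j => (j == m)%:R) (V m)) h.
rewrite /= ffunE meval0 sum_ffunE raddf_sum /= => <-.
rewrite (bigD1 m) //= big1 ?addr0.
  rewrite !ffunE mevalZ !mevalM mevalB !mevalXU (negbTE hm) meval0 rmorphXn /=.
  rewrite /u /usum raddf_sum /= (bigD1 m) //= big1 ?addr0 ?mevalXU ?eqxx.
    by rewrite expr1n !mulr1 subr0 /= !mulr1.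
  by move=> j /negbTE; rewrite mevalXU => ->.
move=> j /andP [_ /negbTE hj]; rewrite !ffunE mevalZ !mevalM mevalXU hj.
by rewrite mul0r mul0r mulr0.
Qed.

Lemma indep' (P : pred 'I_n) (c : 'I_n -> F) :
  \sum_(m < n | P m) c m *: Ylm F L m = 0 ->
  forall m, P m -> (m < L)%N -> c m = 0.
Proof.
move=> h m Pm hm.
apply: (@indep P c (fun m : 'I_n => (L - m - 1)%N) _ m Pm).
  by rewrite -[RHS]h; apply: eq_bigr => j _; rewrite Y_eq.
by apply/eqP => e; rewrite e ltnn in hm.
Qed.

End A.

Theorem corollary_gen (F : comNzRingType) (n : nat) (hn : (1 < n)%N) :
  let Y := fun m : 'I_n => Ylm F (ordLast hn) m in
  [/\
      (forall m : 'I_n, (m < n.-1)%N -> lie_bracket (ladder F n) (Y m) = 0),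
      (forall c : 'I_n -> F,
         \sum_(m < n | (m < n.-1)%N) c m *: Y m = 0 ->
         forall m : 'I_n, (m < n.-1)%N -> c m = 0) &
      (forall m k : 'I_n, (m < n.-1)%N -> (k < n.-1)%N ->
         lie_bracket (Y m) (Y k) = 0)].
Proof.
move=> Y.
have hL : forall m : 'I_n, (m < n.-1)%N -> m != ordLast hn.
  by move=> m hm; apply/eqP => /(congr1 val) /= e; rewrite e ltnn in hm.
have hk : forall m : 'I_n, (m < n.-1)%N ->
    (ordLast hn : nat) = (ordLast hn - m - 1 + m + 1)%N.
  by move=> m hm /=; rewrite -addnA -subnDA addn1 subnK.
split.
- move=> m hm; rewrite /Y Y_eq; exact: sym_main (hk m hm) (hL m hm).
- move=> c hc m hm; exact: (@indep' F n (ordLast hn) _ c hc m hm hm).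
- by move=> m k hm hk'; rewrite /Y !Y_eq; apply: comm_main; apply: hL.
Qed.

Theorem corollary1 (R : realType) (n : nat) (hn : (1 < n)%N) :
  let Y := fun m : 'I_n => Ylm R[i] (ordLast hn) m in
  [/\ (* Lie symmetries of the ladder system *)
      (forall m : 'I_n, (m < n.-1)%N -> lie_bracket (ladder R[i] n) (Y m) = 0),
      (* linearly independent over C *)
      (forall c : 'I_n -> R[i],
         \sum_(m < n | (m < n.-1)%N) c m *: Y m = 0 ->
         forall m : 'I_n, (m < n.-1)%N -> c m = 0) &
      (* pairwise commuting *)
      (forall m k : 'I_n, (m < n.-1)%N -> (k < n.-1)%N ->
         lie_bracket (Y m) (Y k) = 0)].
Proof. exact: (@corollary_gen R[i] n hn). Qed.
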